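(* Let $H$ be a finite dimensional Hopf algebra over a field $k$. The following are equivalent: (a) (ITG) $\epsilon(\textstyle\int^r)\neq0$; (b) (Cond1); (c) (Cond1) and (Cond2).
   Context: Here $d=0$ is the injective dimension of $H$, $k=H/\ker\epsilon$, and $\textstyle\int^r=\operatorname{Hom}_{H^{\mathrm{op}}}(k_H,H_H)$, identified with the classical right integral $\{t\in H: th=t\epsilon(h)\ \forall h\}$; it is a $1$-dimensional left $H$-module. (Cond1): the map $\operatorname{Hom}_H(\textstyle\int^r,{}_HH)\to\operatorname{Hom}_H(\textstyle\int^r,{}_Hk)$ induced by $\epsilon$ is an isomorphism. (Cond2): for every simple left $H$-module $T\not\cong\textstyle\int^r$, $\operatorname{Hom}_H(T,k)=0$. *)

(* Defs.v *)
(* Finite dimensional Hopf algebras over a field K are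
   modelled as F-algebras  H : falgType K  (finite dimensional unital
   associative K-algebras, mathcomp/field/falgebra.v) equipped with a
   comultiplication, a counit and an antipode satisfying the Hopf axioms.
   Since MathComp has no tensor products, an element of H (x) H is written
   in coordinates w.r.t. the canonical basis  b := vbasis {:H}  of H:
   a matrix  t : 'M[K]_(n, n)  (n = \dim {:H}) stands for
   \sum_(i, j) t i j  b_i (x) b_j. *)
From HB Require Import structures.
From mathcomp Require Import all_boot all_order all_algebra all_field.
Set Implicit Arguments.
Unset Strict Implicit.
Unset Printing Implicit Defensive.
Import GRing.Theory.
Local Open Scope ring_scope.

Section Hopf.
Variables (K : fieldType) (H : falgType K).

Definition hdim : nat := \dim (fullv : {vspace H}).
Definition hb : hdim.-tuple H := vbasis (fullv : {vspace H}).
Definition hbi (i : 'I_hdim) : H := tnth hb i.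
Definition hcoord (i : 'I_hdim) (x : H) : K := coord hb i x.

Definition tens (x y : H) : 'M[K]_(hdim, hdim) :=
  \matrix_(i, j) (hcoord i x * hcoord j y).

Definition tapp (V : lmodType K) (t : 'M[K]_(hdim, hdim)) (F : H -> H -> V) : V :=
  \sum_(i < hdim) \sum_(j < hdim) t i j *: F (hbi i) (hbi j).

Definition tmul (s t : 'M[K]_(hdim, hdim)) : 'M[K]_(hdim, hdim) :=
  tapp s (fun x y => tapp t (fun x' y' => tens (x * x') (y * y'))).

Definition klin (U V : lmodType K) (f : U -> V) : Prop :=
  forall (a : K) (u v : U), f (a *: u + v) = a *: f u + f v.
Definition klinK (U : lmodType K) (f : U -> K) : Prop :=
  forall (a : K) (u v : U), f (a *: u + v) = a * f u + f v.

Definition is_hopf (D : H -> 'M[K]_(hdim, hdim)) (eps : H -> K) (S : H -> H) : Prop :=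
  [/\
      [/\ klin D, (forall x y, D (x * y) = tmul (D x) (D y)) & D 1 = tens 1 1],
      (* coassociativity: (Delta (x) id) Delta = (id (x) Delta) Delta,
         compared coefficientwise on the basis b_p (x) b_q (x) b_r *)
      (forall h p q r, \sum_(i < hdim) D h i r * D (hbi i) p q
                       = \sum_(j < hdim) D h p j * D (hbi j) q r),
      [/\ klinK eps, (forall x y, eps (x * y) = eps x * eps y) & eps 1 = 1],
      (forall h, tapp (D h) (fun x y => eps x *: y) = h /\
                 tapp (D h) (fun x y => eps y *: x) = h) &
      klin S /\
      (forall h, tapp (D h) (fun x y => S x * y) = eps h *: 1 /\
                 tapp (D h) (fun x y => x * S y) = eps h *: 1)].

Definition right_integral (eps : H -> K) (t : H) : Prop :=
  forall h : H, t * h = eps h *: t.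

Definition is_lmod (V : vectType K) (act : H -> V -> V) : Prop :=
  [/\ forall v, klin (act^~ v), forall h, klin (act h),
      (forall x y v, act (x * y) v = act x (act y v)) & (forall v, act 1 v = v)].

Definition is_simple_lmod (V : vectType K) (act : H -> V -> V) : Prop :=
  is_lmod act /\ (fullv : {vspace V}) != 0%VS /\
  forall U : {vspace V}, (forall h u, u \in U -> act h u \in U) ->
    U = 0%VS \/ U = fullv.

(* Elements of Hom_H(int^r, M), where int^r is a left H-module via left
   multiplication in H, are represented by functions f : H -> M whose
   restriction to int^r is K-linear and H-linear; two such are equal
   iff they agree on int^r. *)
Definition hom_int_H (eps : H -> K) (f : H -> H) : Prop :=
  (forall a u v, right_integral eps u -> right_integral eps v ->
     f (a *: u + v) = a *: f u + f v) /\
  (forall h t, right_integral eps t -> f (h * t) = h * f t).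

(* k = H / ker eps, i.e. K with h . c = eps(h) c *)
Definition hom_int_k (eps : H -> K) (g : H -> K) : Prop :=
  (forall a u v, right_integral eps u -> right_integral eps v ->
     g (a *: u + v) = a * g u + g v) /\
  (forall h t, right_integral eps t -> g (h * t) = eps h * g t).

(* (Cond1): Hom_H(int^r, H) -> Hom_H(int^r, k), f |-> eps o f, is bijective *)
Definition Cond1 (eps : H -> K) : Prop :=
  (forall f1 f2, hom_int_H eps f1 -> hom_int_H eps f2 ->
     (forall t, right_integral eps t -> eps (f1 t) = eps (f2 t)) ->
     forall t, right_integral eps t -> f1 t = f2 t) /\
  (forall g, hom_int_k eps g ->
     exists f, hom_int_H eps f /\ forall t, right_integral eps t -> eps (f t) = g t).

Definition iso_to_int (eps : H -> K) (V : vectType K) (act : H -> V -> V) : Prop :=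
  exists g : H -> V,
    [/\ forall a u v, right_integral eps u -> right_integral eps v ->
          g (a *: u + v) = a *: g u + g v,
        forall h t, right_integral eps t -> g (h * t) = act h (g t),
        forall u v, right_integral eps u -> right_integral eps v -> g u = g v -> u = v &
        forall w : V, exists2 t, right_integral eps t & g t = w].

Definition hom_to_k (eps : H -> K) (V : vectType K) (act : H -> V -> V) (g : V -> K) : Prop :=
  klinK g /\ forall h v, g (act h v) = eps h * g v.

Definition Cond2 (eps : H -> K) : Prop :=
  forall (V : vectType K) (act : H -> V -> V), is_simple_lmod act ->
    ~ iso_to_int eps act ->
    forall g : V -> K, hom_to_k eps act g -> forall v, g v = 0.

Definition ITG (eps : H -> K) : Prop :=
  exists2 t, right_integral eps t & eps t != 0.

End Hopf.

(* Main.v *)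
Require Import Defs.
From HB Require Import structures.
From mathcomp Require Import all_boot all_order all_algebra all_field.
From Stdlib Require Import Classical.
Set Implicit Arguments.
Unset Strict Implicit.
Unset Printing Implicit Defensive.
Import GRing.Theory.
Local Open Scope ring_scope.


Section KL.
Variable K : fieldType.

Lemma klin0 (U V : lmodType K) (f : U -> V) : klin f -> f 0 = 0.
Proof.
move=> hf; have h := hf 1 0 0; rewrite scaler0 addr0 scale1r in h.
by move/(congr1 (fun x => x - f 0)): h; rewrite addrK subrr => <-.
Qed.
Lemma klinD (U V : lmodType K) (f : U -> V) : klin f -> forall u v, f (u + v) = f u + f v.
Proof. by move=> hf u v; rewrite -[u in LHS]scale1r hf scale1r. Qed.
Lemma klinZ (U V : lmodType K) (f : U -> V) : klin f -> forall a u, f (a *: u) = a *: f u.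
Proof. by move=> hf a u; rewrite -[a *: u]addr0 hf klin0 // addr0. Qed.
Lemma klin_sum (U V : lmodType K) (f : U -> V) : klin f ->
  forall (I : Type) (r : seq I) (P : pred I) (F : I -> U),
  f (\sum_(i <- r | P i) F i) = \sum_(i <- r | P i) f (F i).
Proof. by move=> hf; apply: big_morph; [apply: klinD | apply: klin0]. Qed.

Lemma klinK0 (U : lmodType K) (f : U -> K) : klinK f -> f 0 = 0.
Proof.
move=> hf; have h := hf 1 0 0; rewrite scaler0 addr0 mul1r in h.
by move/(congr1 (fun x => x - f 0)): h; rewrite addrK subrr => <-.
Qed.
Lemma klinKD (U : lmodType K) (f : U -> K) : klinK f -> forall u v, f (u + v) = f u + f v.
Proof. by move=> hf u v; rewrite -[u in LHS]scale1r hf mul1r. Qed.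
Lemma klinKZ (U : lmodType K) (f : U -> K) : klinK f -> forall a u, f (a *: u) = a * f u.
Proof. by move=> hf a u; rewrite -[a *: u]addr0 hf klinK0 // addr0. Qed.
Lemma klinK_sum (U : lmodType K) (f : U -> K) : klinK f ->
  forall (I : Type) (r : seq I) (P : pred I) (F : I -> U),
  f (\sum_(i <- r | P i) F i) = \sum_(i <- r | P i) f (F i).
Proof. by move=> hf; apply: big_morph; [apply: klinKD | apply: klinK0]. Qed.

Lemma klin_comp (U V W : lmodType K) (f : U -> V) (g : V -> W) :
  klin f -> klin g -> klin (fun x => g (f x)).
Proof. by move=> hf hg a u v; rewrite hf hg. Qed.
Lemma klinK_comp (U V : lmodType K) (f : U -> V) (g : V -> K) :
  klin f -> klinK g -> klinK (fun x => g (f x)).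
Proof. by move=> hf hg a u v; rewrite hf hg. Qed.
Lemma klin_scal (U V : lmodType K) (g : U -> K) (d : V) :
  klinK g -> klin (fun x => g x *: d).
Proof. by move=> hg a u v; rewrite hg scalerDl scalerA. Qed.
Lemma klin_id (U : lmodType K) : klin (fun x : U => x).
Proof. by []. Qed.
End KL.

Section Gen.
Variables (K : fieldType) (H : falgType K).
Local Notation n := (hdim H).
Local Notation b := (@hbi K H).

Lemma hbiE (i : 'I_n) : b i = (vbasis (fullv : {vspace H}))`_i.
Proof. by rewrite /hbi (tnth_nth 0). Qed.

Lemma hexp (x : H) : x = \sum_(i < n) hcoord i x *: b i.
Proof.
rewrite [x in LHS](coord_vbasis (memvf x)); apply: eq_bigr => i _.
by rewrite hbiE.
Qed.

Lemma hcoord_lin (i : 'I_n) : klinK (@hcoord K H i).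
Proof. by move=> a u v; rewrite /hcoord linearP. Qed.

Lemma hcoord_b (i j : 'I_n) : hcoord i (b j) = (j == i)%:R.
Proof.
rewrite /hcoord hbiE /hb; apply: coord_free.
exact: basis_free (vbasisP _).
Qed.

Lemma EXP (V : lmodType K) (G : H -> V) : klin G ->
  forall x, G x = \sum_(i < n) hcoord i x *: G (b i).
Proof.
move=> hG x; rewrite [x in LHS]hexp klin_sum //; apply: eq_bigr => i _.
by rewrite klinZ.
Qed.

Lemma EXPK (G : H -> K) : klinK G ->
  forall x, G x = \sum_(i < n) hcoord i x * G (b i).
Proof.
move=> hG x; rewrite [x in LHS]hexp klinK_sum //; apply: eq_bigr => i _.
by rewrite klinKZ.
Qed.

Lemma hcoord_uniq (c : 'I_n -> K) (j : 'I_n) :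
  hcoord j (\sum_(i < n) c i *: b i) = c j.
Proof.
rewrite klinK_sum; last exact: hcoord_lin.
rewrite (bigD1 j) //= (klinKZ (hcoord_lin j)) hcoord_b eqxx mulr1 big1 ?addr0 //.
by move=> i /negPf ji; rewrite (klinKZ (hcoord_lin j)) hcoord_b ji mulr0.
Qed.

Definition bilin (V : lmodType K) (F : H -> H -> V) :=
  (forall y, klin (fun x => F x y)) /\ (forall x, klin (F x)).

Lemma tapp_linM (V : lmodType K) (F : H -> H -> V) : klin (fun s => tapp s F).
Proof.
move=> a s t; rewrite /tapp scaler_sumr -big_split; apply: eq_bigr => i _.
rewrite scaler_sumr -big_split; apply: eq_bigr => j _.
by rewrite !mxE scalerDl scalerA.
Qed.

Lemma tapp_lin (V W : lmodType K) (L : V -> W) s (F : H -> H -> V) : klin L ->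
  L (tapp s F) = tapp s (fun x y => L (F x y)).
Proof.
move=> hL; rewrite /tapp klin_sum //; apply: eq_bigr => i _.
rewrite klin_sum //; apply: eq_bigr => j _; by rewrite klinZ.
Qed.

Lemma tapp_ext (V : lmodType K) s (F G : H -> H -> V) :
  (forall x y, F x y = G x y) -> tapp s F = tapp s G.
Proof. by move=> e; apply: eq_bigr => i _; apply: eq_bigr => j _; rewrite e. Qed.

Lemma tapp_add (V : lmodType K) s (F G : H -> H -> V) :
  tapp s (fun x y => F x y + G x y) = tapp s F + tapp s G.
Proof.
rewrite /tapp -big_split; apply: eq_bigr => i _; rewrite -big_split.
by apply: eq_bigr => j _; rewrite scalerDr.
Qed.

Lemma tapp_scale (V : lmodType K) s c (F : H -> H -> V) :
  tapp s (fun x y => c *: F x y) = c *: tapp s F.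
Proof.
rewrite /tapp scaler_sumr; apply: eq_bigr => i _; rewrite scaler_sumr.
by apply: eq_bigr => j _; rewrite !scalerA mulrC.
Qed.

Lemma tapp_sum (V : lmodType K) s (I : Type) (r : seq I) (F : I -> H -> H -> V) :
  tapp s (fun x y => \sum_(k <- r) F k x y) = \sum_(k <- r) tapp s (F k).
Proof.
rewrite /tapp; under eq_bigr do under eq_bigr do rewrite scaler_sumr.
under eq_bigr do rewrite exchange_big. by rewrite exchange_big.
Qed.

Lemma tapp_fubini (V : lmodType K) s t (G : H -> H -> H -> H -> V) :
  tapp s (fun x y => tapp t (fun u v => G x y u v)) =
  tapp t (fun u v => tapp s (fun x y => G x y u v)).
Proof.
transitivity (\sum_(k < hdim H) \sum_(l < hdim H)
   t k l *: tapp s (fun x y => G x y (hbi k) (hbi l))); last by [].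
symmetry; under eq_bigr do under eq_bigr do rewrite -tapp_scale.
under eq_bigr do rewrite -tapp_sum. rewrite -tapp_sum.
by apply: tapp_ext => x y.
Qed.

Lemma tapp_tens (V : lmodType K) (F : H -> H -> V) x y : bilin F ->
  tapp (tens x y) F = F x y.
Proof.
case=> h1 h2; rewrite /tapp (EXP (h1 y)); apply: eq_bigr => i _.
rewrite (EXP (h2 (b i))) scaler_sumr; apply: eq_bigr => j _.
by rewrite mxE scalerA.
Qed.

End Gen.


Section Hopf.
Variables (K : fieldType) (H : falgType K).
Variables (D : H -> 'M[K]_(hdim H, hdim H)) (eps : H -> K) (S : H -> H).
Hypothesis hH : is_hopf D eps S.
Local Notation n := (hdim H).
Local Notation b := (@hbi K H).

Lemma D_lin : klin D. Proof. by case: hH => [[]]. Qed.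
Lemma D_mul x y : D (x * y) = tmul (D x) (D y). Proof. by case: hH => [[]]. Qed.
Lemma D_one : D 1 = tens 1 1. Proof. by case: hH => [[]]. Qed.
Lemma D_coass h p q r : \sum_(i < n) D h i r * D (b i) p q
                       = \sum_(j < n) D h p j * D (b j) q r.
Proof. by case: hH. Qed.
Lemma eps_lin : klinK eps. Proof. by case: hH => _ _ []. Qed.
Lemma eps_mul x y : eps (x * y) = eps x * eps y. Proof. by case: hH => _ _ []. Qed.
Lemma eps_one : eps 1 = 1. Proof. by case: hH => _ _ []. Qed.
Lemma counit1 h : tapp (D h) (fun x y => eps x *: y) = h. Proof. by case: hH => _ _ _ /(_ h) []. Qed.
Lemma counit2 h : tapp (D h) (fun x y => eps y *: x) = h. Proof. by case: hH => _ _ _ /(_ h) []. Qed.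
Lemma S_lin : klin S. Proof. by case: hH => _ _ _ _ []. Qed.
Lemma antipL h : tapp (D h) (fun x y => S x * y) = eps h *: 1.
Proof. by case: hH => _ _ _ _ [] _ /(_ h) []. Qed.
Lemma antipR h : tapp (D h) (fun x y => x * S y) = eps h *: 1.
Proof. by case: hH => _ _ _ _ [] _ /(_ h) []. Qed.

Lemma klin_mulL (f : H -> H) c : klin f -> klin (fun x => c * f x).
Proof. by move=> hf a u v; rewrite hf mulrDr scalerAr. Qed.
Lemma klin_mulR (f : H -> H) c : klin f -> klin (fun x => f x * c).
Proof. by move=> hf a u v; rewrite hf mulrDl scalerAl. Qed.

Lemma sw_lin (V : lmodType K) (F : H -> H -> V) : klin (fun h => tapp (D h) F).
Proof. by move=> a u v; rewrite D_lin; apply: tapp_linM. Qed.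

Lemma counitL (V : lmodType K) (G : H -> V) h : klin G ->
  tapp (D h) (fun x y => eps x *: G y) = G h.
Proof.
move=> hG; rewrite -{2}(counit1 h) (tapp_lin _ _ hG).
by apply: tapp_ext => x y; rewrite (klinZ hG).
Qed.
Lemma counitR (V : lmodType K) (G : H -> V) h : klin G ->
  tapp (D h) (fun x y => eps y *: G x) = G h.
Proof.
move=> hG; rewrite -{2}(counit2 h) (tapp_lin _ _ hG).
by apply: tapp_ext => x y; rewrite (klinZ hG).
Qed.

Lemma coassoc (V : lmodType K) (G : H -> H -> H -> V) h :
  tapp (D h) (fun x y => tapp (D x) (fun a c => G a c y)) =
  tapp (D h) (fun x y => tapp (D y) (fun a c => G x a c)).
Proof.
transitivity (\sum_(p < n) \sum_(q < n) \sum_(r < n)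
   (\sum_(i < n) D h i r * D (b i) p q) *: G (b p) (b q) (b r)).
  rewrite /tapp.
  under eq_bigr do under eq_bigr do rewrite scaler_sumr.
  under eq_bigr do under eq_bigr do under eq_bigr do rewrite scaler_sumr.
  under eq_bigr do under eq_bigr do under eq_bigr do under eq_bigr do rewrite scalerA.
  rewrite exchange_big.
  under eq_bigr do rewrite exchange_big.
  under eq_bigr do under eq_bigr do rewrite exchange_big.
  rewrite exchange_big.
  under eq_bigr do rewrite exchange_big.
  apply: eq_bigr => p _; apply: eq_bigr => q _; apply: eq_bigr => r _.
  by rewrite scaler_suml.
under eq_bigr do under eq_bigr do under eq_bigr do rewrite D_coass.
rewrite /tapp.
under [RHS]eq_bigr do under eq_bigr do rewrite scaler_sumr.
under [RHS]eq_bigr do under eq_bigr do under eq_bigr do rewrite scaler_sumr.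
under [RHS]eq_bigr do under eq_bigr do under eq_bigr do under eq_bigr do rewrite scalerA.
under [RHS]eq_bigr do rewrite exchange_big.
under [RHS]eq_bigr do under eq_bigr do rewrite exchange_big.
apply: eq_bigr => p _; apply: eq_bigr => q _; apply: eq_bigr => r _.
by rewrite scaler_suml.
Qed.

Lemma D_mulT (V : lmodType K) (F : H -> H -> V) x y : bilin F ->
  tapp (D (x * y)) F =
  tapp (D x) (fun a c => tapp (D y) (fun a' c' => F (a * a') (c * c'))).
Proof.
move=> hF; rewrite D_mul /tmul (tapp_lin _ _ (tapp_linM F)).
apply: tapp_ext => a c; rewrite (tapp_lin _ _ (tapp_linM F)).
by apply: tapp_ext => a' c'; rewrite tapp_tens.
Qed.


Lemma bilin_Smul : bilin (fun x y : H => S x * y).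
Proof.
split=> [y|x]; first exact: (klin_mulR y S_lin).
move=> a u v; by rewrite mulrDr scalerAr.
Qed.
Lemma bilin_mulS : bilin (fun x y : H => x * S y).
Proof.
split=> [y|x]; first by move=> a u v; rewrite mulrDl scalerAl.
exact: (klin_mulL x S_lin).
Qed.

Lemma S_one : S 1 = 1.
Proof.
have := antipL 1; rewrite D_one tapp_tens; last exact: bilin_Smul.
by rewrite eps_one scale1r mulr1.
Qed.

Lemma scal1_inj (a c : K) : a *: (1 : H) = c *: 1 -> a = c.
Proof.
move/eqP; rewrite -subr_eq0 -scalerBl scaler_eq0 oner_eq0 orbF subr_eq0.
by move/eqP.
Qed.

Lemma klin_eps1 : klin (fun x : H => eps x *: (1 : H)).
Proof. exact: klin_scal eps_lin. Qed.

Lemma epsS h : eps (S h) = eps h.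
Proof.
apply: scal1_inj.
have := congr1 (fun x => eps x *: (1 : H)) (antipR h).
rewrite /= (klinKZ eps_lin) eps_one mulr1 (tapp_lin _ _ klin_eps1) => <-.
under tapp_ext do rewrite eps_mul -scalerA.
by rewrite (counitL _ (klin_comp S_lin klin_eps1)).
Qed.

Lemma klin_sc (V : lmodType K) (f : H -> V) k : klin f -> klin (fun x => k *: f x).
Proof. by move=> hf a u v; rewrite hf scalerDr !scalerA mulrC. Qed.

Lemma tapp_mulR s (F : H -> H -> H) c : tapp s (fun x y => F x y * c) = tapp s F * c.
Proof. by rewrite (tapp_lin _ _ (klin_mulR c (@klin_id _ H))). Qed.
Lemma tapp_mulL s (F : H -> H -> H) c : tapp s (fun x y => c * F x y) = c * tapp s F.
Proof. by rewrite (tapp_lin _ _ (klin_mulL c (@klin_id _ H))). Qed.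

Lemma S_anti a c : S (a * c) = S c * S a.
Proof.
have e1 : S (a * c) = tapp (D a) (fun a1 a2 => tapp (D c) (fun c1 c2 =>
                   S (a1 * c1) * (eps a2 *: (eps c2 *: 1)))).
  transitivity (tapp (D a) (fun a1 a2 => eps a2 *: S (a1 * c))).
    by rewrite (counitR _ (klin_comp (klin_mulR c (@klin_id _ H)) S_lin)).
  apply: tapp_ext => a1 a2.
  transitivity (tapp (D c) (fun c1 c2 => eps c2 *: (eps a2 *: S (a1 * c1)))).
    by rewrite (counitR _ (klin_sc _ (klin_comp (klin_mulL a1 (@klin_id _ H)) S_lin))).
  apply: tapp_ext => c1 c2.
  by rewrite -!scalerAr mulr1 !scalerA mulrC.
have e2 : forall a2 c2, eps a2 *: (eps c2 *: (1 : H)) =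
    tapp (D a2) (fun x y => tapp (D c2) (fun u v => x * (u * S v) * S y)).
  move=> a2 c2.
  transitivity (tapp (D a2) (fun x y => eps c2 *: (x * S y))); last first.
    apply: tapp_ext => x y.
    rewrite -(tapp_lin _ _ (klin_mulR (S y) (klin_mulL x (@klin_id _ H)))).
    by rewrite antipR -scalerAr -scalerAl mulr1.
  by rewrite tapp_scale antipR scalerA mulrC -scalerA.
rewrite e1.
under tapp_ext do under tapp_ext do rewrite e2 (tapp_lin _ _ (klin_mulL _ (@klin_id _ H))).
under tapp_ext do under tapp_ext do under tapp_ext do rewrite (tapp_lin _ _ (klin_mulL _ (@klin_id _ H))).
under tapp_ext do rewrite tapp_fubini.
have := coassoc (fun a1 x y => tapp (D c) (fun c1 c2 => tapp (D c2) (fun u v =>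
         S (a1 * c1) * (x * (u * S v) * S y)))) a.
move=> /= <-.
under tapp_ext => w y.
  under tapp_ext => a0 c0.
    have := coassoc (fun c1 u v => S (a0 * c1) * (c0 * (u * S v) * S y)) c.
    move=> /= <-.
    over.
  rewrite tapp_fubini.
  have mA : forall p q r s t : H, p * (q * (r * s) * t) = (p * (q * r)) * (s * t).
    by move=> *; rewrite !mulrA.
  under tapp_ext => w' v.
    under tapp_ext => a1 x do under tapp_ext => c1 u do rewrite mA.
    under tapp_ext => a1 x do rewrite tapp_mulR.
    rewrite tapp_mulR -(D_mulT w w' bilin_Smul) antipL eps_mul -scalerAl mul1r -scalerA.
    over.
  rewrite tapp_scale.
  rewrite (counitL _ (klin_mulR (S y) S_lin)).
  over.
by rewrite (counitL _ (klin_mulL (S c) S_lin)).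
Qed.

End Hopf.


Section Int.
Variables (K : fieldType) (H : falgType K).
Variables (D : H -> 'M[K]_(hdim H, hdim H)) (eps : H -> K) (S : H -> H).
Hypothesis hH : is_hopf D eps S.
Local Notation n := (hdim H).
Local Notation b := (@hbi K H).

Lemma Sint_left t : right_integral eps t -> forall x, x * S t = eps x *: S t.
Proof.
move=> ht x.
rewrite -(counitR hH _ (klin_mulR (S t) (@klin_id _ H))).
transitivity (tapp (D x) (fun x1 x2 => x1 * S x2) * S t); last first.
  by rewrite (antipR hH) -scalerAl mul1r.
rewrite -tapp_mulR; apply: tapp_ext => x1 x2.
by rewrite -mulrA -(S_anti hH) ht (klinZ (S_lin hH)) scalerAr.
Qed.

Lemma uniq_int e : right_integral eps e -> eps e = 1 ->
  forall t, right_integral eps t -> t = eps t *: e.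
Proof.
move=> he e1.
have key : forall t, right_integral eps t -> t = eps t *: S e.
  move=> t ht; rewrite -(Sint_left he). by rewrite ht (epsS hH) e1 scale1r.
have eSe : e = S e by rewrite {1}(key e he) e1 scale1r.
by move=> t ht; rewrite {1}(key t ht) -eSe.
Qed.


Definition Tint (y : H) : H :=
  \sum_(i < n) tapp (D (b i)) (fun a c => hcoord i (y * S (S a)) *: c).

Lemma hcoord_mulR_lin (i : 'I_n) (z : H) : klinK (fun w : H => hcoord i (w * z)).
Proof. exact: klinK_comp (klin_mulR z (@klin_id _ H)) (hcoord_lin i). Qed.

Lemma Tint_recon x :
  \sum_(j < n) tapp (D (Tint (b j))) (fun c d => hcoord j (x * S c) *: d) = x.
Proof.
transitivity (\sum_(i < n) tapp (D (b i)) (fun a c' =>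
    tapp (D c') (fun c d => hcoord i (x * S c * S (S a)) *: d))).
  under eq_bigr => j _.
    rewrite /Tint (klin_sum (sw_lin hH _)).
    under eq_bigr => i _.
      rewrite (tapp_lin _ _ (sw_lin hH _)).
      under tapp_ext => a c do rewrite (klinZ (sw_lin hH _)).
      over.
    over.
  rewrite exchange_big /=; apply: eq_bigr => i _.
  rewrite -tapp_sum; apply: tapp_ext => a c'.
  under eq_bigr do rewrite -tapp_scale.
  rewrite -tapp_sum; apply: tapp_ext => c d.
  rewrite (EXPK (hcoord_mulR_lin i (S (S a))) (x * S c)) scaler_suml.
  by apply: eq_bigr => j _; rewrite scalerA mulrC.
rewrite [RHS]hexp; apply: eq_bigr => i _.
have := coassoc hH (fun a c d => hcoord i (x * S c * S (S a)) *: d) (b i).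
move=> /= <-.
have hL : forall d : H, klin (fun w => hcoord i (x * S w) *: d).
  move=> d; apply: (@klin_scal _ H H (fun w => hcoord i (x * S w)) d).
  exact: klinK_comp (klin_comp (S_lin hH) (klin_mulL x (@klin_id _ H))) (hcoord_lin i).
under tapp_ext => u d.
  under tapp_ext => a c do rewrite -mulrA -(S_anti hH).
  rewrite -(tapp_lin _ _ (hL d)) (antipL hH) (klinZ (S_lin hH)) (S_one hH).
  rewrite -scalerAr mulr1 (klinKZ (hcoord_lin i)) -scalerA.
  over.
by rewrite (counitL hH _ (klin_sc _ (@klin_id _ H))).
Qed.


Lemma Tint_int y h : Tint y * h = eps h *: Tint y.
Proof.
pose P (j : 'I_n) z := tapp (D z) (fun a c => hcoord j (y * S (S a)) *: c).
have hP : forall j, klin (P j) by move=> j; apply: (sw_lin hH).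
pose X := tapp (D h) (fun h1 h2 => \sum_(i < n)
   tapp (D (b i * h2)) (fun a c => hcoord i (y * S (S a) * S h1) *: c)).
have w1 : X = eps h *: Tint y.
  rewrite /X.
  under tapp_ext => h1 h2.
    under eq_bigr => i _.
      under tapp_ext => a c.
        rewrite (EXPK (hcoord_mulR_lin i (S h1)) (y * S (S a))) scaler_suml.
        over.
      over.
    under eq_bigr => i _ do rewrite tapp_sum.
    rewrite exchange_big /=.
    under eq_bigr => j _.
      rewrite (_ : \sum_(i < n) _ = P j (b j * S h1 * h2)); last first.
        rewrite [in RHS](hexp (b j * S h1)) mulr_suml (klin_sum (hP j)).
        apply: eq_bigr => i _; rewrite -scalerAl (klinZ (hP j)) -tapp_scale /P.
        by apply: tapp_ext => a c; rewrite scalerA (mulrC (hcoord j _)).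
      over.
    over.
  rewrite tapp_sum /Tint scaler_sumr; apply: eq_bigr => j _.
  under tapp_ext => h1 h2 do rewrite -mulrA.
  rewrite -(tapp_lin _ _ (klin_comp (klin_mulL (b j) (@klin_id _ H)) (hP j))).
  by rewrite (antipL hH) -scalerAr mulr1 (klinZ (hP j)).
have w2 : X = Tint y * h.
  have bF : forall (i : 'I_n) h1, bilin (fun a c : H => hcoord i (y * S (S a) * S h1) *: c).
    move=> i h1; split=> [c|a].
      apply: (@klin_scal _ H H (fun a => hcoord i (y * S (S a) * S h1)) c).
      apply: klinK_comp (hcoord_lin i).
      exact: klin_mulR (S h1) (klin_mulL y (klin_comp (S_lin hH) (S_lin hH))).
    exact: klin_sc _ (@klin_id _ H).
  rewrite /X.
  under tapp_ext => h1 h2 do under eq_bigr => i _ do rewrite (D_mulT hH _ _ (bF i h1)).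
  rewrite tapp_sum.
  under eq_bigr do rewrite tapp_fubini.
  rewrite /Tint mulr_suml; apply: eq_bigr => i _.
  rewrite -tapp_mulR; apply: tapp_ext => a1 c1.
  have := coassoc hH (fun h1 a2 c2 => hcoord i (y * S (S (a1 * a2)) * S h1) *: (c1 * c2)) h.
  move=> /= <-.
  have hL : forall d : H, klin (fun w => hcoord i (y * S (S a1) * S w) *: d).
    move=> d; apply: (@klin_scal _ H H (fun w => hcoord i (y * S (S a1) * S w)) d).
    exact: klinK_comp (klin_comp (S_lin hH) (klin_mulL _ (@klin_id _ H))) (hcoord_lin i).
  have eq1 : forall h1 a2, y * S (S (a1 * a2)) * S h1 = y * S (S a1) * S (h1 * S a2).
    by move=> h1 a2; rewrite !(S_anti hH) !mulrA.
  under tapp_ext => u c2.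
    under tapp_ext => h1 a2 do rewrite eq1.
    rewrite -(tapp_lin _ _ (hL (c1 * c2))) (antipR hH) (klinZ (S_lin hH)) (S_one hH).
    rewrite -scalerAr mulr1 (klinKZ (hcoord_lin i)) -scalerA.
    over.
  rewrite (counitL hH _ (klin_sc _ (klin_mulL c1 (@klin_id _ H)))).
  by rewrite scalerAl.
by rewrite -w2 w1.
Qed.

Lemma int_exists : exists2 t, right_integral eps t & t != 0.
Proof.
case: (boolP [exists j, Tint (b j) != 0]).
  case/existsP=> j hj; exists (Tint (b j)) => //.
  by move=> h; rewrite Tint_int.
rewrite negb_exists => /forallP hall.
have := Tint_recon 1.
rewrite big1; last first.
  move=> j _; move: (hall j); rewrite negbK => /eqP ->.
  rewrite (klin0 (D_lin hH)) /tapp big1 // => i _; rewrite big1 // => k _.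
  by rewrite mxE scale0r.
move/eqP; rewrite eq_sym oner_eq0 //.
Qed.

End Int.


Section Main.
Variables (K : fieldType) (H : falgType K).
Variables (D : H -> 'M[K]_(hdim H, hdim H)) (eps : H -> K) (S : H -> H).
Hypothesis hH : is_hopf D eps S.

Lemma norm_int : ITG eps -> exists2 e, right_integral eps e & eps e = 1.
Proof.
case=> t0 ht0 nz; exists ((eps t0)^-1 *: t0).
  by move=> h; rewrite -scalerAl ht0 !scalerA mulrC.
by rewrite (klinKZ (eps_lin hH)) mulVf.
Qed.

Lemma ITG_Cond1 : ITG eps -> Cond1 eps.
Proof.
case/norm_int=> e he ee.
have tE : forall t, right_integral eps t -> t * e = t.
  by move=> t ht; rewrite ht ee scale1r.
have fE : forall f, hom_int_H eps f -> forall t, right_integral eps t ->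
    f t = eps (f e) *: t.
  move=> f [lf mf] t ht.
  have fe : f e = eps (f e) *: e by rewrite -{1}(tE e he) mf // he.
  by rewrite -{1}(tE t ht) mf // fe -scalerAr tE.
split.
  move=> f1 f2 h1 h2 heq t ht.
  by rewrite (fE f1 h1 t ht) (fE f2 h2 t ht) (heq e he).
move=> g [lg mg]; exists (fun x => g e *: x); split.
- split.
    by move=> a u v _ _; rewrite scalerDr !scalerA mulrC.
  by move=> h t _; rewrite scalerAr.
- move=> t ht; rewrite (klinKZ (eps_lin hH)) -{2}(tE t ht) mg //.
  by rewrite mulrC.
Qed.

Lemma Cond1_ITG : Cond1 eps -> ITG eps.
Proof.
case=> inj _; case: (classic (ITG eps)) => // nI.
have h0 : forall t, right_integral eps t -> eps t = 0.
  move=> t ht; case: (eqVneq (eps t) 0) => // nz; case: nI; by exists t.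
case: (int_exists hH) => t ht nz.
have := inj (fun _ => 0) (fun x => x).
have hz : hom_int_H eps (fun _ : H => 0).
  by split; [move=> *; rewrite scaler0 addr0 | move=> *; rewrite mulr0].
have hi : hom_int_H eps (fun x : H => x) by split.
move=> /(_ hz hi) h.
have heq : forall t', right_integral eps t' ->
    eps ((fun _ : H => 0) t') = eps ((fun x => x) t').
  by move=> t' ht'; rewrite /= (klinK0 (eps_lin hH)) h0.
have t0 := h heq t ht.
by rewrite -t0 eqxx in nz.
Qed.

Lemma Cond1_Cond2 : Cond1 eps -> Cond2 eps.
Proof.
move/Cond1_ITG/norm_int => [e he ee].
have uE := uniq_int hH he ee.
move=> V act [[hA1 hA2 hAm hA1v] [nzV hsimp]] niso g [lg mg] v.
case: (eqVneq (g v) 0) => // gv; exfalso; apply: niso.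
pose w := act e v.
have gw : g w = g v by rewrite /w mg ee mul1r.
have wnz : w != 0.
  by apply/eqP => w0; move: gv; rewrite -gw w0 (klinK0 lg) eqxx.
have actE : forall k, act (k *: e) v = k *: w.
  by move=> k; rewrite (klinZ (hA1 v)).
have intM : forall h t, right_integral eps t -> right_integral eps (h * t).
  by move=> h t ht x; rewrite -mulrA ht scalerAr.
have intZ : forall k, right_integral eps (k *: e).
  by move=> k x; rewrite -scalerAl he !scalerA mulrC.
have stab : forall h u, u \in <[w]>%VS -> act h u \in <[w]>%VS.
  move=> h u /vlineP [k ->]; apply/vlineP; exists (k * eps h).
  rewrite (klinZ (hA2 h)) /w -hAm (uE _ (intM h e he)) (eps_mul hH) ee mulr1.
  by rewrite actE scalerA.
have full : (<[w]>%VS = fullv).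
  case: (hsimp _ stab) => // w0.
  by move: wnz; rewrite -memv0 -w0 memv_line.
exists (fun x => act x v); split.
- by move=> a u u' _ _; rewrite hA1.
- by move=> h t _; rewrite hAm.
- move=> u u' hu hu'; rewrite (uE u hu) (uE u' hu') !actE => /eqP.
  rewrite -subr_eq0 -scalerBl scaler_eq0 (negPf wnz) orbF subr_eq0 => /eqP ->.
  by [].
- move=> w'; have : w' \in <[w]>%VS by rewrite full memvf.
  by case/vlineP=> k ->; exists (k *: e); [apply: intZ | rewrite actE].
Qed.

End Main.

Theorem lemma3p5 (K : fieldType) (H : falgType K)
    (D : H -> 'M[K]_(hdim H, hdim H)) (eps : H -> K) (S : H -> H) :
  is_hopf D eps S ->
  (ITG eps <-> Cond1 eps) /\ (Cond1 eps <-> Cond1 eps /\ Cond2 eps).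
Proof.
move=> hH; split; first by split; [apply: (ITG_Cond1 hH) | apply: (Cond1_ITG hH)].
split; last by case.
by move=> c; split=> //; apply: (Cond1_Cond2 hH).
Qed.
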